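(* Let $A$ be a metabelian Lie algebra over a field $k$ and let $a\in A$ be such that $a\circ c=0$ for every $c\in A^2$. Then $a\in\mathrm{Fit}(A)$.
   Context: A Lie algebra is metabelian if $(a\circ b)\circ(c\circ d)=0$ identically. $A^2$ is the ideal spanned by all products $a\circ b$; $\mathrm{Fit}(A)$ (Fitting radical) is the ideal generated by all elements lying in nilpotent ideals of $A$. *)

(* Defs.v *)
(* Lie algebras over a field K, possibly infinite-dimensional:
   the carrier is an lmodType K with a bracket satisfying the Lie axioms. *)
From mathcomp Require Import all_boot all_order all_algebra.
Set Implicit Arguments. Unset Strict Implicit. Unset Printing Implicit Defensive.
Import GRing.Theory.
Local Open Scope ring_scope.

(* Lie algebra axioms for a bracket [x, y] = br x y (written a ∘ b in the paper). *)
Record is_lie_algebra (K : fieldType) (V : lmodType K) (br : V -> V -> V) : Prop := {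
  lie_linl : forall (c : K) (x y z : V), br (c *: x + y) z = c *: br x z + br y z;
  lie_linr : forall (c : K) (x y z : V), br z (c *: x + y) = c *: br z x + br z y;
  lie_alt  : forall x : V, br x x = 0;
  lie_jacobi : forall x y z : V,
      br x (br y z) + br y (br z x) + br z (br x y) = 0
}.

Definition metabelian (K : fieldType) (V : lmodType K) (br : V -> V -> V) : Prop :=
  forall a b c d : V, br (br a b) (br c d) = 0.

Definition is_subspace (K : fieldType) (V : lmodType K) (S : V -> Prop) : Prop :=
  S 0 /\ (forall x y, S x -> S y -> S (x + y)) /\ (forall (c : K) x, S x -> S (c *: x)).

Definition span (K : fieldType) (V : lmodType K) (P : V -> Prop) : V -> Prop :=
  fun x => forall S : V -> Prop, is_subspace S -> (forall y, P y -> S y) -> S x.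

Definition is_ideal (K : fieldType) (V : lmodType K) (br : V -> V -> V)
  (I : V -> Prop) : Prop :=
  is_subspace I /\ (forall x y, I y -> I (br x y)).

Definition derived (K : fieldType) (V : lmodType K) (br : V -> V -> V) : V -> Prop :=
  span (fun z => exists a b, z = br a b).

(* lower central series of (the Lie algebra) I: I^1 = I, I^{n+1} = [I, I^n] *)
Fixpoint lcs (K : fieldType) (V : lmodType K) (br : V -> V -> V)
  (I : V -> Prop) (n : nat) : V -> Prop :=
  match n with
  | 0 => I
  | n'.+1 => span (fun z => exists x y, I x /\ lcs br I n' y /\ z = br x y)
  end.

Definition is_nilpotent (K : fieldType) (V : lmodType K) (br : V -> V -> V)
  (I : V -> Prop) : Prop :=
  exists n : nat, forall x, lcs br I n x -> x = 0.

(* Fitting radical: the ideal generated by all elements lying in nilpotent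
   ideals, i.e. the intersection of all ideals containing them. *)
Definition Fit (K : fieldType) (V : lmodType K) (br : V -> V -> V) : V -> Prop :=
  fun x => forall J : V -> Prop, is_ideal br J ->
    (forall y, (exists I, is_ideal br I /\ is_nilpotent br I /\ I y) -> J y) -> J x.

(* Main.v *)
Require Import Defs.
From mathcomp Require Import all_boot all_order all_algebra.
Local Open Scope ring_scope.
Import GRing.Theory.

Section S.
Variables (K : fieldType) (V : lmodType K) (br : V -> V -> V).
Hypothesis HL : is_lie_algebra br.

Lemma span_sub (P : V -> Prop) : is_subspace (Defs.span P).
Proof.
split; [|split].
- by move=> S [S0 _] _.
- move=> x y Hx Hy S HS HP; case: (HS) => _ [HD _]; exact: HD (Hx S HS HP) (Hy S HS HP).
- move=> c x Hx S HS HP; case: (HS) => _ [_ HZ]; exact: HZ (Hx S HS HP).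
Qed.

Lemma span_gen (P : V -> Prop) x : P x -> Defs.span P x.
Proof. by move=> Px S _ HP; apply: HP. Qed.

Lemma brDl x y z : br (x + y) z = br x z + br y z.
Proof. by have := lie_linl HL 1 x y z; rewrite !scale1r. Qed.
Lemma brDr x y z : br z (x + y) = br z x + br z y.
Proof. by have := lie_linr HL 1 x y z; rewrite !scale1r. Qed.
Lemma br0l z : br 0 z = 0.
Proof. have := brDl 0 0 z; rewrite addr0 => /eqP; rewrite -subr_eq0.
  by rewrite opprD addrA subrr sub0r oppr_eq0 => /eqP.
Qed.
Lemma br0r z : br z 0 = 0.
Proof. have := brDr 0 0 z; rewrite addr0 => /eqP; rewrite -subr_eq0.
  by rewrite opprD addrA subrr sub0r oppr_eq0 => /eqP.
Qed.
Lemma brZl c x z : br (c *: x) z = c *: br x z.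
Proof. by have := lie_linl HL c x 0 z; rewrite !addr0 br0l addr0. Qed.
Lemma brZr c x z : br z (c *: x) = c *: br z x.
Proof. by have := lie_linr HL c x 0 z; rewrite !addr0 br0r addr0. Qed.
Lemma br_anti x y : br y x = - br x y.
Proof.
have := lie_alt HL (x + y); rewrite brDl !brDr !lie_alt // add0r addr0.
by move/eqP; rewrite addr_eq0 => /eqP ->; rewrite opprK.
Qed.
End S.

Theorem lemma2p1p4 (K : fieldType) (V : lmodType K) (br : V -> V -> V)
  (HL : is_lie_algebra br) (Hmet : metabelian br) (a : V)
  (Ha : forall c : V, derived br c -> br a c = 0) :
  Fit br a.
Proof.
have Dsub : is_subspace (derived br) by apply: span_sub.
have D0 : derived br 0 by case: Dsub.
have Dcc : forall c c', derived br c -> derived br c' -> br c c' = 0.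
  move=> c c' Hc Hc'.
  have H1 : forall u v, br c (br u v) = 0.
    move=> u v; apply: (Hc (fun x => br x (br u v) = 0)).
    - split; [|split].
      + exact: br0l.
      + by move=> x y Hx Hy; rewrite brDl // Hx Hy addr0.
      + by move=> k x Hx; rewrite brZl // Hx scaler0.
    - by move=> y [p [q ->]]; apply: Hmet.
  apply: (Hc' (fun x => br c x = 0)).
  - split; [|split].
    + exact: br0r.
    + by move=> x y Hx Hy; rewrite brDr // Hx Hy addr0.
    + by move=> k x Hx; rewrite brZr // Hx scaler0.
  - by move=> y [p [q ->]]; apply: H1.
pose I := fun x => exists k c, derived br c /\ x = k *: a + c.
have HI : is_ideal br I.
  split; [split; [|split]|].
  - by exists 0, 0; rewrite scale0r addr0.
  - move=> x y [k [c [Hc ->]]] [k' [c' [Hc' ->]]]; exists (k + k'), (c + c'); split.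
      by case: Dsub => _ [HD _]; apply: HD.
    by rewrite scalerDl addrACA.
  - move=> k x [k' [c [Hc ->]]]; exists (k * k'), (k *: c); split.
      by case: Dsub => _ [_ HZ]; apply: HZ.
    by rewrite scalerDr scalerA.
  - move=> x y _; exists 0, (br x y); split; last by rewrite scale0r add0r.
    by apply: span_gen; exists x, y.
move=> J HJ HF; apply: HF; exists I; split => //; split; last first.
  by exists 1, 0; rewrite scale1r addr0.
exists 1%N => x /= Hx; apply: (Hx (fun z => z = 0)).
  split; [|split] => //; first by move=> ? ? -> ->; rewrite addr0.
  by move=> ? ? ->; rewrite scaler0.
move=> y [x1 [x2 [[k [c [Hc ->]]] [[k' [c' [Hc' ->]]] ->]]]].
have E1 : br a (k' *: a + c') = 0.
  by rewrite (@brDr _ _ _ HL) (@brZr _ _ _ HL) (lie_alt HL) scaler0 add0r (Ha c' Hc').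
have E2 : br c (k' *: a + c') = 0.
  rewrite (@brDr _ _ _ HL) (@brZr _ _ _ HL) (@br_anti _ _ _ HL a c) (Ha c Hc) oppr0 scaler0 add0r.
  exact: Dcc.
by rewrite (@brDl _ _ _ HL) (@brZl _ _ _ HL) E1 E2 scaler0 addr0.
Qed.
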